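(* The exposure difference $ED$ satisfies boundedness, whereas none of the exposure metrics $ER$, $DTD$, $DTR$, $DID$, $DIR$ satisfies boundedness. Here a metric $m$ satisfies boundedness if there are $v_{\min},v_{\max}\in\mathbb R$ such that for every population $\mathcal D$, every candidate set $D\subseteq\mathcal D$ and every ranking $r$ of $D$, the value $m(r)$ is well-defined and $v_{\min}\le m(r)\le v_{\max}$.
   Context: A population is a finite set $\mathcal{D}$ of candidates partitioned into two nonempty groups, a non-protected group $G_0$ and a protected group $G_1$; each candidate $d$ has a relevance score $y(d)\in\mathbb R$. For a candidate set $D\subseteq\mathcal D$ with $n=|D|$, a ranking is a bijection $r:\{1,\dots,n\}\to D$ and $r^{-1}(d)$ is the position of $d$. Position bias $b(k)=1/\log_2(k+1)$. Exposure metrics: for $G\in\{G_0,G_1\}$, $\mathrm{Exposure}(G|r)=\frac{1}{|G|}\sum_{d\in G\cap D} b(r^{-1}(d))$, $Y(G)=\frac1{|G|}\sum_{d\in G}y(d)$, $CTR(G|r)=\frac1{|G|}\sum_{d\in G\cap D} b(r^{-1}(d))\,y(d)$ ($|G|$ is the group size in the whole population). $ED(r)=\mathrm{Exposure}(G_1|r)-\mathrm{Exposure}(G_0|r)$, $ER(r)=\mathrm{Exposure}(G_1|r)/\mathrm{Exposure}(G_0|r)$, $DTD(r)=\frac{\mathrm{Exposure}(G_1|r)}{Y(G_1)}-\frac{\mathrm{Exposure}(G_0|r)}{Y(G_0)}$, $DTR(r)=\frac{\mathrm{Exposure}(G_1|r)}{\mathrm{Exposure}(G_0|r)}\cdot\frac{Y(G_0)}{Y(G_1)}$,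 $DID(r)=\frac{CTR(G_1|r)}{Y(G_1)}-\frac{CTR(G_0|r)}{Y(G_0)}$, $DIR(r)=\frac{CTR(G_1|r)}{CTR(G_0|r)}\cdot\frac{Y(G_0)}{Y(G_1)}$. *)

(* Defs.v *)
From HB Require Import structures.
From mathcomp Require Import all_boot all_order all_algebra.
From mathcomp Require Import reals exp.
Set Implicit Arguments. Unset Strict Implicit. Unset Printing Implicit Defensive.
Import Order.TTheory GRing.Theory Num.Theory.
Local Open Scope ring_scope.

Section Metrics.
Variable R : realType.

Definition bias (k : nat) : R := 1 / (ln (k.+1%:R) / ln 2).

Variable T : finType.       (* the population \mathcal D = all of T *)
Variable grp : T -> bool.
Variable y : T -> R.

Definition G1 : {set T} := [set d | grp d].
Definition G0 : {set T} := [set d | ~~ grp d].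

(* A ranking of D is a duplicate-free list r enumerating D;
   the position r^{-1}(d) of d is (index d r).+1. *)
Definition pos (r : seq T) (d : T) : nat := (index d r).+1.

Definition Exposure (G : {set T}) (r : seq T) : R :=
  (\sum_(d in G | d \in r) bias (pos r d)) / #|G|%:R.
Definition Yavg (G : {set T}) : R := (\sum_(d in G) y d) / #|G|%:R.
Definition CTR (G : {set T}) (r : seq T) : R :=
  (\sum_(d in G | d \in r) bias (pos r d) * y d) / #|G|%:R.

(* metrics; [None] means "not well-defined" (division by zero) *)
Definition ED (r : seq T) : option R :=
  Some (Exposure G1 r - Exposure G0 r).
Definition ER (r : seq T) : option R :=
  if Exposure G0 r == 0 then None else Some (Exposure G1 r / Exposure G0 r).
Definition DTD (r : seq T) : option R :=
  if (Yavg G1 == 0) || (Yavg G0 == 0) then None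
  else Some (Exposure G1 r / Yavg G1 - Exposure G0 r / Yavg G0).
Definition DTR (r : seq T) : option R :=
  if (Exposure G0 r == 0) || (Yavg G1 == 0) then None
  else Some ((Exposure G1 r / Exposure G0 r) * (Yavg G0 / Yavg G1)).
Definition DID (r : seq T) : option R :=
  if (Yavg G1 == 0) || (Yavg G0 == 0) then None
  else Some (CTR G1 r / Yavg G1 - CTR G0 r / Yavg G0).
Definition DIR (r : seq T) : option R :=
  if (CTR G0 r == 0) || (Yavg G1 == 0) then None
  else Some ((CTR G1 r / CTR G0 r) * (Yavg G0 / Yavg G1)).

End Metrics.

Definition metric (R : realType) :=
  forall T : finType, (T -> bool) -> (T -> R) -> seq T -> option R.

Definition bounded (R : realType) (m : metric R) : Prop :=
  exists vmin vmax : R,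
    forall (T : finType) (grp : T -> bool) (y : T -> R),
      (exists d, grp d) -> (exists d, ~~ grp d) ->
      forall (D : {set T}) (r : seq T),
        uniq r -> (forall d, (d \in D) = (d \in r)) ->
        exists v, m T grp y r = Some v /\ vmin <= v <= vmax.

Definition mED (R : realType) : metric R := fun T grp y r => @ED R T grp r.
Definition mER (R : realType) : metric R := fun T grp y r => @ER R T grp r.
Definition mDTD (R : realType) : metric R := fun T grp y r => @DTD R T grp y r.
Definition mDTR (R : realType) : metric R := fun T grp y r => @DTR R T grp y r.
Definition mDID (R : realType) : metric R := fun T grp y r => @DID R T grp y r.
Definition mDIR (R : realType) : metric R := fun T grp y r => @DIR R T grp y r.

(* Main.v *)
Require Import Defs.
From HB Require Import structures.
From mathcomp Require Import all_boot all_order all_algebra.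
From mathcomp Require Import reals exp.
Import Order.TTheory GRing.Theory Num.Theory.
Local Open Scope ring_scope.

Lemma bias01 (R : realType) k : 0 <= bias R k <= 1.
Proof.
rewrite /bias; case: k => [|k].
  by rewrite ln1 mul0r invr0 mulr0 lexx ler01.
have l2 : 0 < ln (2%:R : R) by apply: ln_gt0; rewrite ltr1n.
have lk : ln (2%:R : R) <= ln (k.+2%:R) by rewrite ler_ln ?posrE ?ltr0n // ler_nat.
have lk0 : 0 < ln (k.+2%:R : R) by apply: lt_le_trans lk.
rewrite div1r invf_div; apply/andP; split.
  by rewrite divr_ge0 // ltW.
by rewrite ler_pdivrMr // mul1r.
Qed.

Lemma Exp01 (R : realType) (T : finType) (G : {set T}) r :
  0 <= Exposure R G r <= 1.
Proof.
rewrite /Exposure; apply/andP; split.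
  by rewrite divr_ge0 // sumr_ge0 // => i _; case/andP: (bias01 R (pos r i)).
have H : \sum_(d in G | d \in r) bias R (pos r d) <= #|G|%:R.
  rewrite big_mkcondr /= (_ : #|G|%:R = \sum_(i in G) (1:R)); last by rewrite sumr_const.
  apply: ler_sum => i _; case: (i \in r) => //.
  by case/andP: (bias01 R (pos r i)).
have [->|n0] := eqVneq #|G| 0%N; first by rewrite invr0 mulr0 ler01.
by rewrite ler_pdivrMr ?mul1r // ltr0n lt0n.
Qed.

Lemma no_bound (R : realType) (m : metric R) :
  m bool id (fun _ => 0) [::] = None -> ~ bounded m.
Proof.
move=> Hm [vmin [vmax H]].
have [|v [Hv _]] := H bool id (fun _ => 0) (ex_intro _ true erefl)
   (ex_intro _ false erefl) set0 [::] erefl.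
  by move=> d; rewrite in_set0.
by rewrite Hm in Hv.
Qed.

Lemma sum_nil (R : realType) (G : {set bool}) (F : bool -> R) :
  \sum_(d in G | d \in [::]) F d = 0.
Proof. by rewrite big1 // => i /andP[_]; rewrite in_nil. Qed.

Theorem theorem3 (R : realType) :
  bounded (@mED R) /\ ~ bounded (@mER R) /\ ~ bounded (@mDTD R) /\
  ~ bounded (@mDTR R) /\ ~ bounded (@mDID R) /\ ~ bounded (@mDIR R).
Proof.
split.
  exists (-1), 1 => T grp y _ _ D r _ _.
  exists (Exposure R (G1 grp) r - Exposure R (G0 grp) r); split => //.
  case/andP: (Exp01 R _ (G1 grp) r) => a b; case/andP: (Exp01 R _ (G0 grp) r) => c d.
  apply/andP; split.
    by have := lerB a d; rewrite sub0r.
  by have := lerB b c; rewrite subr0.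
have E0 : Exposure R (G0 id) [::] = 0 by rewrite /Exposure sum_nil mul0r.
have C0 : CTR (fun _ : bool => (0:R)) (G0 id) [::] = 0 by rewrite /CTR sum_nil mul0r.
have Y0 : Yavg (fun _ : bool => (0:R)) (G1 id) = 0 by rewrite /Yavg big1 // mul0r.
split; first by apply: no_bound; rewrite /mER /ER E0 eqxx.
split; first by apply: no_bound; rewrite /mDTD /DTD Y0 eqxx.
split; first by apply: no_bound; rewrite /mDTR /DTR E0 eqxx.
split; first by apply: no_bound; rewrite /mDID /DID Y0 eqxx.
by apply: no_bound; rewrite /mDIR /DIR C0 eqxx.
Qed.
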